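(* Let $\mathcal S$ be the toy stabilizer group of a maximal information (pure) state on $N$ elementary systems, and let parties $A$ and $B$ hold $N_A$ and $N_B$ of these elementary systems respectively, with $N_A+N_B = N$. Let $\mathcal S_A$ (resp. $\mathcal S_B$) be the subgroup of elements of $\mathcal S$ acting as the identity on every elementary system of $B$ (resp. of $A$), and $\mathcal S_A\cdot\mathcal S_B$ the group they generate. Then the state is entangled (with respect to $A|B$) if and only if $\mathcal S\neq\mathcal S_A\cdot\mathcal S_B$.
   Context: Toy Pauli matrices $\mathcal{X} = \mathrm{diag}(1,-1,1,-1)$, $\mathcal{Y} = \mathrm{diag}(1,-1,-1,1)$, $\mathcal{Z} = \mathrm{diag}(1,1,-1,-1)$; toy Pauli group $G_N = \{\alpha\,p_1\otimes\cdots\otimes p_N: p_i\in\{\mathbb 1_4,\mathcal X,\mathcal Y,\mathcal Z\},\alpha=\pm1\}$. Elements $g,h\in G_N$ ''commute'' if their images under the homomorphism $\mathcal X_k\mapsto X_k$, $\mathcal Z_k\mapsto Z_k$, $-\mathbb 1\mapsto -\mathbb 1$ into the $N$-qubit Pauli group commute. A toy stabilizer group is a subgroup of $G_N$ of pairwise ''commuting'' elements not containing $-\mathbb 1$; its epistemic state is the set of ontic states $e_{i_1}\otimes\cdots\otimes e_{i_N}$ fixed by all its elements. It is a maximal information state if it has $N$ independent generators. A product state between $A$ and $B$ is an epistemic state of the form $E_A\times E_B = \{(a,b): a\in E_A, b\in E_B\}$ with $E_A,E_B$ valid epistemic states on $A$ and $B$. A pure state is entangled if it cannot be written as a product state of epistemic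 states on $A$ and $B$. *)

(* Defs.v *)
From HB Require Import structures.
From mathcomp Require Import all_boot all_order all_algebra all_fingroup.
Set Implicit Arguments. Unset Strict Implicit. Unset Printing Implicit Defensive.
Import GRing.Theory Num.Theory.

Inductive tpauli := tI | tX | tY | tZ.

Definition tp_code (p : tpauli) : bool * bool :=
  match p with tI => (false, false) | tX => (true, false)
             | tZ => (false, true) | tY => (true, true) end.
Definition tp_decode (c : bool * bool) : tpauli :=
  match c with (false, false) => tI | (true, false) => tX
             | (false, true) => tZ | (true, true) => tY end.
Lemma tp_codeK : cancel tp_code tp_decode. Proof. by case. Qed.
HB.instance Definition _ := Finite.copy tpauli (can_type tp_codeK).

(* The diagonal entries of the toy Pauli matrices (ontic states e_1..e_4 are
   indexed by 'I_4 = {0,1,2,3}):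
   1 = diag(1,1,1,1), X = diag(1,-1,1,-1), Y = diag(1,-1,-1,1), Z = diag(1,1,-1,-1). *)
Definition tdiag (p : tpauli) (i : 'I_4) : int :=
  match p, nat_of_ord i with
  | tI, _ => 1
  | tX, 0 => 1 | tX, 1 => -1 | tX, 2 => 1 | tX, _ => -1
  | tY, 0 => 1 | tY, 1 => -1 | tY, 2 => -1 | tY, _ => 1
  | tZ, 0 => 1 | tZ, 1 => 1 | tZ, 2 => -1 | tZ, _ => -1
  end.

(* matrix product of toy Pauli matrices (they are diagonal, so XY = Z etc.) *)
Definition tmulp (p q : tpauli) : tpauli :=
  match p, q with
  | tI, r | r, tI => r
  | tX, tX | tY, tY | tZ, tZ => tI
  | tX, tY | tY, tX => tZ
  | tX, tZ | tZ, tX => tY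
  | tY, tZ | tZ, tY => tX
  end.

Lemma tdiag_mul p q i : tdiag (tmulp p q) i = (tdiag p i * tdiag q i)%R.
Proof. by case: i => [[|[|[|[|n]]]] Hi] //; case: p; case: q. Qed.

(* an element alpha p_1 (x) ... (x) p_N : first component true iff alpha = -1 *)
Definition toyP (T : finType) := (bool * {ffun T -> tpauli})%type.
HB.instance Definition _ (T : finType) := Finite.on (toyP T).

Section ToyGroup.
Variable T : finType.
Definition tmul (g h : toyP T) : toyP T :=
  (addb g.1 h.1, [ffun k => tmulp (g.2 k) (h.2 k)]).
Definition tone : toyP T := (false, [ffun => tI]).
Definition tinv (g : toyP T) : toyP T := g.
Lemma tmulA : associative tmul.
Proof.
move=> [a f] [b g] [c h]; rewrite /tmul /= addbA; congr pair.
by apply/ffunP => k; rewrite !ffunE; case: (f k); case: (g k); case: (h k).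
Qed.
Lemma tmul1 : left_id tone tmul.
Proof. by move=> [a f]; rewrite /tmul /=; congr pair; apply/ffunP => k; rewrite !ffunE. Qed.
Lemma tmulV : left_inverse tone tinv tmul.
Proof.
move=> [a f]; rewrite /tmul /= addbb; congr pair.
by apply/ffunP => k; rewrite !ffunE; case: (f k).
Qed.
End ToyGroup.
HB.instance Definition _ (T : finType) :=
  Finite_isGroup.Build (toyP T) (@tmulA T) (@tmul1 T) (@tmulV T).

Definition tminus1 (T : finType) : toyP T := (true, [ffun => tI]).

(* "commutation": images under X_k |-> X_k, Z_k |-> Z_k (hence Y_k = X_k Z_k |-> X_k Z_k),
   -1 |-> -1 in the N-qubit Pauli group.  A qubit Pauli is +-X^a Z^b (a,b bit vectors);
   two such commute iff sum_k (a_k b'_k + b_k a'_k) is even. *)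
Definition xpart (p : tpauli) : bool := (p == tX) || (p == tY).
Definition zpart (p : tpauli) : bool := (p == tZ) || (p == tY).
Definition tcomm (T : finType) (g h : toyP T) : bool :=
  ~~ odd (\sum_(k : T) ((xpart (g.2 k) && zpart (h.2 k)) + (zpart (g.2 k) && xpart (h.2 k)))).

Definition ontic (T : finType) := {ffun T -> 'I_4}.

(* g fixes the ontic state s: g e_s = alpha prod_k p_k(s_k) e_s = e_s *)
Definition tfixes (T : finType) (g : toyP T) (s : ontic T) : bool :=
  ((-1) ^+ g.1 * \prod_(k : T) tdiag (g.2 k) (s k) == 1 :> int)%R.

Definition is_tstab (T : finType) (S : {group toyP T}) : Prop :=
  {in S &, forall g h, tcomm g h} /\ tminus1 T \notin S.

Definition epi (T : finType) (S : {set toyP T}) : {set ontic T} :=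
  [set s | [forall g in S, tfixes g s]].

Definition max_info (T : finType) (S : {group toyP T}) : Prop :=
  exists gens : {set toyP T},
    [/\ #|gens| = #|T|, <<gens>>%g = S
      & {in gens, forall g, g \notin <<gens :\ g>>%g}].

Definition valid_epi (T : finType) (E : {set ontic T}) : Prop :=
  exists S : {group toyP T}, is_tstab S /\ E = epi S.

Definition subsys (T : finType) (A : {set T}) : finType := {k : T | k \in A}.
Definition restrict (T : finType) (A : {set T}) (s : ontic T) : ontic (subsys A) :=
  [ffun k => s (val k)].

Definition is_product (T : finType) (A : {set T}) (E : {set ontic T}) : Prop :=
  exists (EA : {set ontic (subsys A)}) (EB : {set ontic (subsys (~: A))}),
    [/\ valid_epi EA, valid_epi EB &
        E = [set s | (restrict A s \in EA) && (restrict (~: A) s \in EB)]].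

Definition local_sub (T : finType) (S : {set toyP T}) (A : {set T}) : {set toyP T} :=
  [set g in S | [forall k in ~: A, g.2 k == tI]].

(* Main.v *)
Require Import Defs.
From HB Require Import structures.
From mathcomp Require Import all_boot all_order all_algebra all_fingroup.
From mathcomp Require Import zify.
Set Implicit Arguments. Unset Strict Implicit. Unset Printing Implicit Defensive.
Import Order.TTheory GRing.Theory Num.Theory.

Section Chi.
Variable T : finType.
Implicit Types g h : toyP T.
Implicit Types s : ontic T.

Definition chi g s : int := ((-1) ^+ g.1 * \prod_(k : T) tdiag (g.2 k) (s k))%R.

Lemma tfixesE g s : tfixes g s = (chi g s == 1%R).
Proof. by []. Qed.

Lemma chiM g h s : chi (g * h)%g s = (chi g s * chi h s)%R.
Proof.
rewrite /chi /= signr_addb.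
rewrite (eq_bigr (fun k => tdiag (g.2 k) (s k) * tdiag (h.2 k) (s k))%R); last first.
  by move=> k _; rewrite ffunE tdiag_mul.
by rewrite big_split /= mulrACA.
Qed.

Lemma chi1 s : chi 1%g s = 1%R.
Proof.
rewrite /chi /= expr0 mul1r big1 // => k _; by rewrite ffunE.
Qed.

Lemma chi_pm1 g s : (chi g s == 1%R) || (chi g s == (-1)%R).
Proof.
rewrite /chi; set P := fun x : int => (x == 1%R) || (x == (-1)%R).
have PM : forall x y, P x -> P y -> P (x * y)%R.
  by move=> x y /orP[]/eqP-> /orP[]/eqP->; rewrite /P ?mulr1 ?mul1r ?mulrNN ?mulr1 ?eqxx ?orbT.
apply: (PM); first by case: (g.1); rewrite /P /= ?expr0 ?expr1 ?eqxx ?orbT.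
apply: (big_ind P); [by rewrite /P eqxx | exact: PM | ].
by move=> k _; case: (g.2 k); case: (s k) => [[|[|[|[|n]]]] Hn].
Qed.

Lemma sum_tdiag p : (\sum_(i : 'I_4) tdiag p i)%R = if p == tI then 4%R else 0%R.
Proof. by rewrite !big_ord_recl big_ord0; case: p. Qed.

Lemma sum_chi g : (\sum_(s : ontic T) chi g s)%R =
  if g.2 == [ffun => tI] then ((-1) ^+ g.1 * 4 ^+ #|T|)%R else 0%R.
Proof.
rewrite /chi -big_distrr /=.
rewrite -(bigA_distr_bigA (fun k i => tdiag (g.2 k) i)) /=.
under eq_bigr do rewrite sum_tdiag.
case: eqP => [->|/eqP ne].
  by rewrite (eq_bigr (fun _ => 4%R)) ?prodr_const // => k _; rewrite ffunE.
have [k nk] : exists k, g.2 k != tI.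
  apply/existsP; apply: contraR ne; rewrite negb_exists => /forallP H.
  by apply/eqP/ffunP => k; rewrite ffunE; apply/eqP; have := H k; rewrite negbK.
by rewrite (bigD1 k) //= (negbTE nk) mul0r mulr0.
Qed.

Lemma pair_eq g : g.2 = [ffun => tI] -> g = if g.1 then tminus1 T else 1%g.
Proof. by case: g => b f /= ->; case: b. Qed.

Lemma stab_lemma (K : {group toyP T}) g :
  tminus1 T \notin K -> (forall s, s \in epi K -> tfixes g s) -> g \in K.
Proof.
move=> nm fixg.
pose c s := (\sum_(h in K) chi h s)%R.
have step1 : forall s, (c s * chi g s = c s)%R.
  move=> s; case: (boolP (s \in epi K)) => sE.
    by have := fixg s sE; rewrite tfixesE => /eqP ->; rewrite mulr1.
  move: sE; rewrite inE => /forall_inPn [h0 h0K nf].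
  have e : chi h0 s = (-1)%R.
    by move: (chi_pm1 h0 s) nf; rewrite tfixesE => /orP[]/eqP ->.
  have : c s = (chi h0 s * c s)%R.
    rewrite /c big_distrr /= (reindex_inj (mulgI h0)) /=.
    apply: eq_big => h; first by rewrite groupMl.
    by move=> _; rewrite chiM.
  rewrite e mulN1r => H.
  have -> : c s = 0%R by lia.
  by rewrite mul0r.
pose D k := (\sum_(s : ontic T) chi k s)%R.
have step2 : forall g', (\sum_s c s * chi g' s)%R = (\sum_(h in K) D (h * g')%g)%R.
  move=> g'; rewrite /c /D.
  under eq_bigr do rewrite big_distrl /=.
  rewrite exchange_big /=; apply: eq_bigr => h _.
  by apply: eq_bigr => s _; rewrite chiM.
have e2 : (\sum_(h in K) D (h * g)%g)%R = (\sum_(h in K) D h)%R.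
  rewrite -step2 (eq_bigr _ (fun s _ => step1 s)).
  rewrite (eq_bigr (fun h => D (h * 1)%g)); last by move=> h _; rewrite mulg1.
  by rewrite -step2; apply: eq_bigr => s _; rewrite chi1 mulr1.
have e3 : (\sum_(h in K) D h)%R = (4 ^+ #|T|)%R.
  rewrite (bigD1 1%g) //= big1 ?addr0.
    by rewrite /D sum_chi /= eqxx expr0 mul1r.
  move=> h /andP[hK h1]; rewrite /D sum_chi; case: eqP => // /pair_eq eh.
  move: eh hK h1; case: (h.1) => -> hK; first by rewrite hK in nm.
  by rewrite eqxx.
apply: contraTT isT => gK; exfalso.
have : (\sum_(h in K) D (h * g)%g <= 0)%R.
  apply: sumr_le0 => h hK; rewrite /D sum_chi; case: eqP => // /pair_eq eh.
  move: eh; case: ((h * g)%g.1) => eh; first by rewrite expr1 mulN1r oppr_le0 exprn_ge0.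
  have : g = h^-1%g by apply: (mulgI h); rewrite mulgV.
  by move=> gh; rewrite gh groupV hK in gK.
rewrite e2 e3 => H.
have : (0 < 4 ^+ #|T| :> int)%R by rewrite exprn_gt0.
by rewrite ltNge H.
Qed.
End Chi.

Section Restr.
Variable T : finType.
Variable A : {set T}.
Implicit Types g h : toyP T.
Implicit Types s : ontic T.

Definition rA g : toyP (subsys A) := (g.1, [ffun k => g.2 (val k)]).
Definition lA (x : toyP (subsys A)) : toyP T :=
  (x.1, [ffun k => if insub k is Some k' then x.2 k' else tI]).
Definition idout g := forall k, k \notin A -> g.2 k = tI.

Lemma rA_mul g h : rA (g * h)%g = (rA g * rA h)%g.
Proof. by rewrite /rA; congr pair; apply/ffunP => k; rewrite !ffunE. Qed.

Lemma rA_1 : rA 1%g = 1%g.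
Proof. by rewrite /rA; congr pair; apply/ffunP => k; rewrite !ffunE. Qed.

Lemma rA_lA x : rA (lA x) = x.
Proof. by case: x => b f; rewrite /rA /lA /=; congr pair; apply/ffunP => k; rewrite !ffunE valK. Qed.

Lemma lA_idout x : idout (lA x).
Proof. by move=> k kA; rewrite /lA /= ffunE insubN. Qed.

Lemma prod_restr (F : T -> int) : (forall k, k \notin A -> F k = 1%R) ->
  (\prod_(k : T) F k)%R = (\prod_(k : subsys A) F (val k))%R.
Proof.
move=> H; rewrite (bigID (mem A)) /= [X in (_ * X)%R]big1 ?mulr1; last first.
  by move=> k kA; apply: H.
exact: big_sub.
Qed.

Lemma sum_restr (F : T -> nat) : (forall k, k \notin A -> F k = 0%N) ->
  (\sum_(k : T) F k)%N = (\sum_(k : subsys A) F (val k))%N.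
Proof.
move=> H; rewrite (bigID (mem A)) /= [X in (_ + X)%N]big1 ?addn0; last first.
  by move=> k kA; apply: H.
exact: big_sub.
Qed.

Lemma tfixes_restr g s : idout g -> tfixes (rA g) (restrict A s) = tfixes g s.
Proof.
move=> H; rewrite !tfixesE /chi /=.
rewrite (@prod_restr (fun k => tdiag (g.2 k) (s k))); last first.
  by move=> k kA; rewrite H.
by rewrite (eq_bigr (fun k => tdiag (g.2 (val k)) (s (val k)))) // => k _; rewrite !ffunE.
Qed.

Lemma tcomm_restr g h : idout g -> tcomm (rA g) (rA h) = tcomm g h.
Proof.
move=> H; rewrite /tcomm /=.
rewrite (@sum_restr (fun k => (xpart (g.2 k) && zpart (h.2 k)) + (zpart (g.2 k) && xpart (h.2 k)))%N); last first.
  by move=> k kA; rewrite H.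
by rewrite (eq_bigr (fun k => ((xpart (g.2 (val k)) && zpart (h.2 (val k))) + (zpart (g.2 (val k)) && xpart (h.2 (val k))))%N)) // => k _; rewrite !ffunE.
Qed.

Lemma rgs (K : {group toyP T}) : group_set (rA @: K).
Proof.
apply/group_setP; split; first by apply/imsetP; exists 1%g => //; rewrite rA_1.
move=> x y /imsetP[g gK ->] /imsetP[h hK ->]; apply/imsetP; exists (g * h)%g.
  exact: groupM.
by rewrite rA_mul.
Qed.

Lemma forall_restr (X : {set toyP T}) s : {in X, forall g, idout g} ->
  [forall x in rA @: X, tfixes x (restrict A s)] = [forall g in X, tfixes g s].
Proof.
move=> H; apply/forall_inP/forall_inP => F g gX.
  by rewrite -(tfixes_restr s (H g gX)); apply: F; apply: imset_f.
by case/imsetP: gX => g' g'X ->; rewrite (tfixes_restr s (H g' g'X)); apply: F.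
Qed.

Lemma local_idout (S : {set toyP T}) g : g \in local_sub S A -> idout g.
Proof.
rewrite inE => /andP[_ /forall_inP H] k kA; apply/eqP; apply: H; by rewrite inE.
Qed.

Lemma lsub_gs (K : {group toyP T}) : group_set (local_sub K A).
Proof.
apply/group_setP; split.
  by rewrite inE group1 /=; apply/forall_inP => k _; rewrite ffunE.
move=> x y; rewrite !inE => /andP[xK /forall_inP Hx] /andP[yK /forall_inP Hy].
rewrite groupM //=; apply/forall_inP => k kA; rewrite ffunE.
by rewrite (eqP (Hx k kA)) (eqP (Hy k kA)).
Qed.

Lemma lift_in (S : {group toyP T}) (S0 : {group toyP (subsys A)}) :
  tminus1 T \notin S ->
  (forall s, s \in epi S -> restrict A s \in epi S0) ->
  forall x, x \in S0 -> lA x \in local_sub S A.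
Proof.
move=> nm H x xS0; rewrite inE; apply/andP; split.
  apply: stab_lemma => // s sS.
  rewrite -tfixes_restr ?rA_lA; last exact: lA_idout.
  by have := H s sS; rewrite inE => /forall_inP; apply.
by apply/forall_inP => k; rewrite inE => kA; rewrite (lA_idout x kA).
Qed.

Lemma minus_restr g : idout g -> rA g = tminus1 (subsys A) -> g = tminus1 T.
Proof.
case: g => b f H [eb ef]; rewrite /tminus1 eb; congr pair.
apply/ffunP => k; rewrite ffunE; case: (boolP (k \in A)) => kA; last exact: H.
by move/ffunP: ef => /(_ (exist _ k kA)); rewrite !ffunE.
Qed.
End Restr.

Section Gen.
Variable T : finType.
Lemma fix_gs (s : ontic T) : group_set [set g : toyP T | tfixes g s].
Proof.
apply/group_setP; split; first by rewrite inE tfixesE chi1.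
by move=> x y; rewrite !inE !tfixesE chiM => /eqP -> /eqP ->; rewrite mulr1.
Qed.

Lemma epi_gen (X : {set toyP T}) s :
  (s \in epi <<X>>%g) = [forall g in X, tfixes g s].
Proof.
rewrite inE; apply/forall_inP/forall_inP => H g gX.
  by apply: H; apply: mem_gen.
have : <<X>>%g \subset [set g : toyP T | tfixes g s].
  rewrite -[[set g | _]]/(gval (Group (fix_gs s))) gen_subG.
  by apply/subsetP => h hX; rewrite inE; apply: H.
by move/subsetP => /(_ g gX); rewrite inE.
Qed.

Lemma forall_U (X Y : {set toyP T}) (P : pred (toyP T)) :
  [forall g in X :|: Y, P g] = [forall g in X, P g] && [forall g in Y, P g].
Proof.
apply/forall_inP/andP => [H|[/forall_inP H1 /forall_inP H2] g].
  by split; apply/forall_inP => g gX; apply: H; rewrite inE gX ?orbT.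
by rewrite inE => /orP[]; [apply: H1 | apply: H2].
Qed.
End Gen.

Lemma key (T : finType) (A : {set T}) (S : {group toyP T}) :
  is_tstab S ->
  (is_product A (epi S) <->
   (S : {set toyP T}) = <<local_sub S A :|: local_sub S (~: A)>>%g).
Proof.
move=> [cS nm]; split.
- move=> [EA [EB [[SA0 [_ eA]] [SB0 [_ eB]] eS]]].
  set H := <<_>>%g.
  have HS : H \subset S.
    rewrite gen_subG subUset; apply/andP; split;
      by apply/subsetP => g; rewrite inE => /andP[].
  have nmH : tminus1 T \notin H by apply: contra nm; apply: (subsetP HS).
  have inA : forall s, s \in epi S -> restrict A s \in epi SA0.
    by move=> s; rewrite eS inE eA => /andP[].
  have inB : forall s, s \in epi S -> restrict (~: A) s \in epi SB0.
    by move=> s; rewrite eS inE eB => /andP[].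
  apply/eqP; rewrite eqEsubset HS andbT; apply/subsetP => g gS.
  apply: stab_lemma => // s; rewrite epi_gen forall_U => /andP[/forall_inP FA /forall_inP FB].
  have sS : s \in epi S.
    rewrite eS inE eA eB; apply/andP; split; rewrite inE; apply/forall_inP => x xS0.
      rewrite -(rA_lA x) tfixes_restr; last exact: lA_idout.
      by apply: FA; apply: lift_in xS0.
    rewrite -(rA_lA x) tfixes_restr; last exact: lA_idout.
    by apply: FB; apply: lift_in xS0.
  by move: sS; rewrite inE => /forall_inP; apply.
- move=> eS.
  pose LA := Group (lsub_gs A S); pose LB := Group (lsub_gs (~: A) S).
  pose GA := Group (rgs A LA); pose GB := Group (rgs (~: A) LB).
  have ts : forall (A' : {set T}) (L : {group toyP T}),
      (L : {set _}) = local_sub S A' -> is_tstab (Group (rgs A' L)).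
    move=> A' L eL; split.
      move=> x y /= /imsetP[g gL ->] /imsetP[h hL ->].
      rewrite eL in gL hL.
      rewrite tcomm_restr; last exact: local_idout gL.
      by apply: cS; move: gL hL; rewrite !inE => /andP[] + _ /andP[] + _.
    apply/imsetP => -[g gL eg]; rewrite eL in gL.
    have := minus_restr (local_idout gL) (esym eg) => e.
    by move: gL; rewrite e inE (negbTE nm).
  exists (epi GA), (epi GB); split.
  + by exists GA; split => //; apply: ts.
  + by exists GB; split => //; apply: ts.
  + apply/setP => s; rewrite eS epi_gen forall_U inE.
    rewrite /epi !in_set /GA /GB /=.
    by rewrite !forall_restr // => g; apply: local_idout.
Qed.

Theorem mainTheorem7 (N : nat) (A : {set 'I_N}) (S : {group toyP 'I_N}) :
  is_tstab S -> max_info S ->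
  (~ is_product A (epi S) <->
   (S : {set toyP 'I_N}) != <<local_sub S A :|: local_sub S (~: A)>>%g).
Proof.
move=> tS _; have [K1 K2] := key A tS; split.
  by move=> np; apply/eqP => e; apply: np; apply: K2.
by move/eqP => ne p; apply: ne; apply: K1.
Qed.
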